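(* Let $K$ be a finite field of characteristic $p$ and order $q$, let $s$ be a positive integer with $\gcd(s,q-1)=1$, let $k$ be a positive integer and $t=(t_1,\dots,t_k)\in(K^\times)^k$. Then in the group algebra $L[K^\times]$, $$W^{[t]}=W\,V^{[t]},$$ where $W=\sum_{u\in K^\times}W_u[u]$, $W^{[t]}=\sum_{u\in K^\times}W_{t_1u}\cdots W_{t_ku}[u]$ and $V^{[t]}=\sum_{u\in K^\times}(Q^t_{1,u}-Q^t_{1,0})[u]$.
   Context: $\zeta=\exp(2\pi i/p)$, $\psi(x)=\zeta^{\mathrm{Tr}(x)}$ with $\mathrm{Tr}$ the absolute trace of $K$ to $\mathbb{F}_p$; $W_u=\sum_{x\in K}\psi(x^s-ux)$. $L=\mathbb{Q}(\zeta,\xi)$ with $\xi=\exp(2\pi i/(q-1))$, and $L[K^\times]$ is the group algebra of $K^\times$ over $L$, elements written $\sum_u S_u[u]$. Let $1/s$ denote the inverse of $s$ modulo $q-1$. For $a,b\in K$, $Q^t_{a,b}$ is the number of $v=(v_1,\dots,v_k)\in K^k$ with $t_1v_1+\cdots+t_kv_k=a$ and $(v_1^s+\cdots+v_k^s)^{1/s}=b$. *)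

(* Defs.v *)
(* Coefficients in algC (algebraic complex numbers), which
   contains L = Q(zeta, xi). *)
From HB Require Import structures.
From mathcomp Require Import all_boot all_order all_algebra all_fingroup all_field.
Set Implicit Arguments. Unset Strict Implicit. Unset Printing Implicit Defensive.
Import Order.TTheory GRing.Theory Num.Theory.
Local Open Scope ring_scope.

Section Defs.
Variables (K : finFieldType) (p : nat).

(* zeta = exp(2 pi i / p): p.-root (-1) is exp(i pi / p) (minimal argument). *)
Definition zeta : algC := (p.-root (-1)) ^+ 2.

Definition abs_tr (x : K) : K := \sum_(i < logn p #|K|) x ^+ (p ^ i).

Definition tr_nat (x : K) : nat :=
  odflt 0%N (omap val [pick m : 'I_p | (m%:R : K) == abs_tr x]).

Definition psi (x : K) : algC := zeta ^+ tr_nat x.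

Variable s : nat.

Definition W (u : K) : algC := \sum_(x : K) psi (x ^+ s - u * x).

Definition sinv : nat :=
  odflt 1%N (omap val [pick r : 'I_#|K| | (0 < r)%N && (s * r == 1 %[mod #|K|.-1])]).

Variable k : nat.
Variable t : 'I_k -> K.

Definition Q (a b : K) : nat :=
  #|[set v : {ffun 'I_k -> K} |
      (\sum_(i < k) t i * v i == a) && ((\sum_(i < k) v i ^+ s) ^+ sinv == b)]|.

End Defs.

(* the group algebra algC[K^x], elements are coefficient functions u |-> S_u *)
Definition galg (K : finFieldType) := {ffun {unit K} -> algC}.

(* product in the group algebra: ([v] * [w] = [v w]) *)
Definition galg_mul (K : finFieldType) (A B : galg K) : galg K :=
  [ffun u => \sum_(v : {unit K}) A v * B (v^-1 * u)%g].

Definition Wel (K : finFieldType) (p s : nat) : galg K :=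
  [ffun u : {unit K} => W p s (val u)].

Definition Wt (K : finFieldType) (p s k : nat) (t : 'I_k -> K) : galg K :=
  [ffun u : {unit K} => \prod_(i < k) W p s (t i * val u)].

Definition Vt (K : finFieldType) (s k : nat) (t : 'I_k -> K) : galg K :=
  [ffun u : {unit K} => (Q s t 1 (val u))%:R - (Q s t 1 0)%:R].

(* Main.v *)
Require Import Defs.
From HB Require Import structures.
From mathcomp Require Import all_boot all_order all_algebra all_fingroup all_field.
From mathcomp Require Import ring zify.
Set Implicit Arguments. Unset Strict Implicit. Unset Printing Implicit Defensive.
Import Order.TTheory GRing.Theory Num.Theory.
Local Open Scope ring_scope.


Section Zeta.
Variable p : nat.
Hypothesis p_gt1 : (1 < p)%N.

Lemma zetaXp : zeta p ^+ p = 1.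
Proof.
rewrite /zeta -exprM mulnC exprM rootCK ?(ltnW p_gt1) //.
by rewrite expr2 mulrNN mulr1.
Qed.

Lemma zeta_neq1 : zeta p != 1.
Proof.
rewrite /zeta; set r := p.-root (-1).
have rp : r ^+ p = -1 by rewrite rootCK ?(ltnW p_gt1).
apply/eqP => r21.
have : (r - 1) * (r + 1) = 0.
  have -> : (r - 1) * (r + 1) = r ^+ 2 - 1 by ring.
  by rewrite r21 subrr.
move/eqP; rewrite mulf_eq0 => /orP[|].
  rewrite subr_eq0 => /eqP r1; move: rp; rewrite r1 expr1n => /eqP.
  by rewrite -subr_eq0 opprK -(natrD _ 1 1) pnatr_eq0.
rewrite addr_eq0 => /eqP rN1.
by have := rootC_lt0 (-1 : algC) p_gt1; rewrite -/r rN1 ltrN10.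
Qed.
End Zeta.

Section Trace.
Variables (K : finFieldType) (p : nat).
Hypothesis hp : p \in [pchar K].
Let n := logn p #|K|.
Let pr_p : prime p. Proof. exact: pcharf_prime hp. Qed.
Let p_gt1 : (1 < p)%N. Proof. exact: prime_gt1. Qed.

Lemma cardK : #|K| = (p ^ n)%N.
Proof. exact: (card_pprimeChar hp). Qed.

Lemma n_gt0 : (0 < n)%N.
Proof.
have := finNzRing_gt1 K; rewrite cardK; case: (n) => //.
Qed.

Lemma frobD (x y : K) i : (x + y) ^+ (p ^ i) = x ^+ (p ^ i) + y ^+ (p ^ i).
Proof.
elim: i => [|i IH]; first by rewrite !expn0 !expr1.
by rewrite !expnSr !exprM IH -!(pFrobenius_autE hp) rmorphD.
Qed.

Lemma abs_trD (x y : K) : abs_tr p (x + y) = abs_tr p x + abs_tr p y.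
Proof. by rewrite /abs_tr -big_split; apply: eq_bigr => i _; rewrite frobD. Qed.

Lemma abs_trXp (x : K) : abs_tr p x ^+ p = abs_tr p x.
Proof.
rewrite /abs_tr -/n -(pFrobenius_autE hp) rmorph_sum /=.
under eq_bigr => i _ do rewrite (pFrobenius_autE hp) -exprM -expnSr.
have Hx : x ^+ (p ^ n) = x by rewrite -cardK expf_card.
move: Hx n_gt0; case: n => // m Hx _.
by rewrite big_ord_recr big_ord_recl /= expn0 expr1 addrC Hx.
Qed.

Lemma natK_eq (a b : nat) : (a%:R : K) = b%:R -> a = b %[mod p].
Proof.
wlog ab : a b / (a <= b)%N.
  move=> W; case: (leqP a b) => [|/ltnW] h E; first exact: W.
  by apply/esym/W.
by move=> E; apply/eqP; rewrite eq_sym eqn_mod_dvd // (dvdn_pcharf hp) natrB // E subrr.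
Qed.

Lemma natK_inj (a b : nat) : (a < p)%N -> (b < p)%N -> (a%:R : K) = b%:R -> a = b.
Proof. by move=> ap bp /natK_eq; rewrite !modn_small. Qed.

Lemma fixed_nat (y : K) : y ^+ p = y -> exists m : 'I_p, m%:R = y.
Proof.
move=> yp; suff /existsP[m /eqP]: [exists m : 'I_p, (m%:R : K) == y] by exists m.
apply: contraT => /existsPn H.
pose P : {poly K} := 'X^p - 'X.
have P0 : P != 0.
  by rewrite -size_poly_eq0 /P size_polyDl ?size_polyXn ?size_polyN ?size_polyX.
have := max_poly_roots (rs := y :: [seq (i%:R : K) | i <- iota 0 p]) P0.
rewrite /P size_polyDl ?size_polyXn ?size_polyN ?size_polyX //= size_map size_iota ltnn.
apply => //.
  rewrite /= rootE !hornerE yp subrr eqxx /=.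
  apply/allP => z /mapP [i _ ->]; rewrite rootE !hornerE.
  by rewrite -(pFrobenius_autE hp) rmorph_nat subrr.
rewrite /= map_inj_in_uniq ?iota_uniq ?andbT.
  apply/mapP => [[i]]; rewrite mem_iota /= => ip E.
  by have /eqP := H (Ordinal ip); rewrite E.
move=> a b; rewrite !mem_iota /= => ap bp; exact: natK_inj.
Qed.


Lemma tr_natE (x : K) : (tr_nat p x < p)%N /\ (tr_nat p x)%:R = abs_tr p x.
Proof.
rewrite /tr_nat; case: pickP => [m /eqP E|H] /=; first by split.
by have [m E] := fixed_nat (abs_trXp x); move: (H m); rewrite E eqxx.
Qed.

Lemma psiD (x y : K) : psi p (x + y) = psi p x * psi p y.
Proof.
rewrite /psi -exprD -(expr_mod _ (zetaXp p_gt1)) -[in RHS](expr_mod _ (zetaXp p_gt1)).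
congr (_ ^+ _); apply: natK_eq.
by rewrite natrD !(tr_natE _).2 abs_trD.
Qed.

Lemma abs_tr0 : abs_tr p (0 : K) = 0.
Proof.
rewrite /abs_tr big1 // => i _; rewrite expr0n; case: eqP => // /eqP.
by rewrite expn_eq0 => /andP[/eqP p0]; move: p_gt1; rewrite [X in (_ < X)%N]p0.
Qed.


Lemma psi0 : psi p (0 : K) = 1.
Proof.
rewrite /psi; have [lt E] := tr_natE 0; rewrite abs_tr0 -(mulr0n (1 : K)) in E.
by rewrite (natK_inj lt (prime_gt0 pr_p) E) expr0.
Qed.

Lemma abs_tr_nz : exists x : K, abs_tr p x != 0.
Proof.
apply/existsP; apply: contraT => /existsPn H.
pose Pt : {poly K} := \sum_(i < n) 'X^(p ^ i).
have PtE x : Pt.[x] = abs_tr p x by rewrite /Pt horner_sum; apply: eq_bigr => i _; rewrite hornerXn.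
have Pt0 : Pt != 0.
  apply/eqP => /(congr1 (fun q : {poly K} => q`_1))/eqP; rewrite coef_sum coef0.
  rewrite (bigD1 (Ordinal n_gt0)) //= big1 ?addr0 ?coefXn ?expn0 ?eqxx ?oner_eq0 //.
  move=> i /eqP ne; rewrite coefXn -{1}(expn0 p) eqn_exp2l //.
  case: i ne => [[|j] hj] ne //=; exfalso; apply: ne; exact: val_inj.
have := max_poly_roots Pt0 (rs := enum K).
rewrite enum_uniq -cardE; have -> : all (root Pt) (enum K).
  by apply/allP => x _; rewrite rootE PtE; move: (H x); rewrite negbK.
move=> /(_ isT isT) lt.
have : (size Pt <= (p ^ n.-1).+1)%N.
  apply: leq_trans (size_sum _ _ _) _; apply/bigmax_leqP => i _.
  rewrite size_polyXn ltnS leq_pexp2l ?prime_gt0 //.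
  by rewrite -ltnS prednK ?n_gt0.
move: lt; rewrite cardK; have := n_gt0; case: (n) => // m _ /=.
have h1 : (0 < p ^ m)%N by rewrite expn_gt0 prime_gt0.
rewrite expnSr => h2 h3.
have : (p ^ m * 2 <= p ^ m * p)%N by rewrite leq_mul2l p_gt1 orbT.
move: h1 h2 h3; generalize (p ^ m)%N => k; generalize (size Pt) => z.
move=> a b c d; have := leq_trans d (ltnSE (leq_trans b c)).
move=> e; suff: False by []; lia.
Qed.

Lemma abs_trZ (c x : K) : c ^+ p = c -> abs_tr p (c * x) = c * abs_tr p x.
Proof.
move=> cp; have cpi i : c ^+ (p ^ i) = c.
  by elim: i => [|i IH]; rewrite ?expn0 ?expr1 // expnSr exprM IH cp.
by rewrite /abs_tr mulr_sumr; apply: eq_bigr => i _; rewrite exprMn cpi.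
Qed.

Lemma exists_tr1 : exists x : K, psi p x = zeta p.
Proof.
have [x0 nz] := abs_tr_nz; exists ((abs_tr p x0)^-1 * x0).
rewrite /psi; have [lt E] := tr_natE ((abs_tr p x0)^-1 * x0).
rewrite abs_trZ ?mulVf // in E; last by rewrite exprVn abs_trXp.
by rewrite -(mulr1n (1 : K)) in E; rewrite (natK_inj lt p_gt1 E) expr1.
Qed.

Lemma sum_psi : \sum_(x : K) psi p x = 0.
Proof.
have [x1 E] := exists_tr1.
have : \sum_(x : K) psi p x = psi p x1 * \sum_(x : K) psi p x.
  rewrite {1}(reindex_inj (addIr x1)) /= mulr_sumr.
  by apply: eq_bigr => x _; rewrite psiD mulrC.
move/eqP; rewrite -subr_eq0 -{1}(mul1r (\sum_x _)) -mulrBl mulf_eq0 E subr_eq0.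
by rewrite eq_sym (negPf (zeta_neq1 p_gt1)) => /eqP.
Qed.

Lemma sum_psiM (c : K) : c != 0 -> \sum_(x : K) psi p (c * x) = 0.
Proof. by move=> c0; rewrite -[RHS](sum_psi) [RHS](reindex_inj (mulfI c0)). Qed.

End Trace.




Section Spow.
Variables (K : finFieldType) (s : nat).
Hypothesis hs : (0 < s)%N.
Hypothesis hcop : coprime s #|K|.-1.

Let q1_gt0 : (0 < #|K|.-1)%N.
Proof. by have := finNzRing_gt1 K; case: #|K| => [|[]]. Qed.

Lemma sinv_spec : (0 < sinv K s)%N /\ (s * sinv K s = 1 %[mod #|K|.-1])%N.
Proof.
rewrite /sinv; case: pickP => [r /andP[r0 /eqP E]|H] //=.
exfalso; have E1 : ((egcdn s #|K|.-1).1 * s = (egcdn s #|K|.-1).2 * #|K|.-1 + gcdn s #|K|.-1)%N.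
  by case: (@egcdnP s #|K|.-1 hs).
move: E1; rewrite (eqnP hcop); set km := (egcdn _ _).1; set kn := (egcdn _ _).2 => E1.
pose r0 := (km %% #|K|.-1)%N.
pose r := if r0 == 0%N then #|K|.-1 else r0.
have rq : (r < #|K|)%N.
  rewrite /r; case: ifP => _; first by rewrite ltn_predL (ltnW (finNzRing_gt1 K)).
  by rewrite /r0 (leq_trans (ltn_pmod _ q1_gt0)) // leq_pred.
have := H (Ordinal rq); rewrite /= => /negP; apply; apply/andP; split.
  by rewrite /r; case: ifP => //; rewrite lt0n => ->.
apply/eqP; have -> : (s * r = s * r0 %[mod #|K|.-1])%N.
  rewrite /r; case: ifP => [/eqP ->|//]; by rewrite muln0 -modnMmr modnn muln0.
by rewrite modnMmr mulnC E1 modnMDl.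
Qed.

Lemma expK_mod (x : K) a : x != 0 -> x ^+ a = x ^+ (a %% #|K|.-1).
Proof.
move=> x0; rewrite expr_mod //.
apply: (mulIf x0); rewrite mul1r -exprSr prednK ?expf_card //.
exact: ltnW (finNzRing_gt1 K).
Qed.

Lemma powK_ss (x : K) : x ^+ (s * sinv K s) = x.
Proof.
have [sp sm] := sinv_spec.
have [->|x0] := eqVneq x 0; first by rewrite expr0n muln_eq0 -!leqn0 leqNgt hs leqNgt sp.
by rewrite expK_mod // sm -expK_mod.
Qed.

Lemma powK (x : K) : (x ^+ s) ^+ sinv K s = x.
Proof. by rewrite -exprM powK_ss. Qed.

Lemma powKV (x : K) : (x ^+ sinv K s) ^+ s = x.
Proof. by rewrite -exprM mulnC powK_ss. Qed.

Lemma pow_inj : injective (fun x : K => x ^+ s).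
Proof. exact: (can_inj (g := fun y : K => y ^+ sinv K s) powK). Qed.

Lemma pow_eq0 (x : K) : (x ^+ s == 0) = (x == 0).
Proof. by rewrite expf_eq0 hs. Qed.

End Spow.


Section Main.
Variables (K : finFieldType) (p : nat).
Hypothesis hp : p \in [pchar K].
Variables (s : nat).
Hypothesis hs : (0 < s)%N.
Hypothesis hcop : coprime s #|K|.-1.
Variables (k : nat).
Hypothesis hk : (0 < k)%N.
Variable t : 'I_k -> K.
Hypothesis ht : forall i, t i != 0.

Local Notation ps := (@psi K p).
Local Notation F := {ffun 'I_k -> K}.
Definition Tf (v : F) : K := \sum_(i < k) t i * v i.
Definition Sf (v : F) : K := \sum_(i < k) v i ^+ s.
Definition scl (c : K) (v : F) : F := [ffun i => c * v i].
Definition dl (z : K) : algC := (z == 0)%:R.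
Local Notation q := (#|K|%:R : algC).

Lemma Tf_scl c v : Tf (scl c v) = c * Tf v.
Proof. by rewrite /Tf mulr_sumr; apply: eq_bigr => i _; rewrite ffunE mulrCA. Qed.

Lemma Sf_scl c v : Sf (scl c v) = c ^+ s * Sf v.
Proof. by rewrite /Sf mulr_sumr; apply: eq_bigr => i _; rewrite ffunE exprMn. Qed.

Lemma scl_inj c : c != 0 -> injective (scl c).
Proof.
move=> c0 v w E; apply/ffunP => i.
by have := congr1 (fun f : F => f i) E; rewrite !ffunE => /(mulfI c0).
Qed.

Lemma psN x : ps (- x) * ps x = 1.
Proof. by rewrite -psiD // addNr psi0. Qed.

Lemma ps_sum (I : finType) (f : I -> K) : ps (\sum_i f i) = \prod_i ps (f i).
Proof. exact: (big_morph _ (psiD hp) (psi0 hp)). Qed.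

Lemma sum_ps_nz (z : K) : \sum_(c : K | c != 0) ps (c * z) = q * dl z - 1.
Proof.
have E : \sum_(c : K) ps (c * z) = q * dl z.
  rewrite /dl; have [->|z0] := eqVneq z 0.
    under eq_bigr do rewrite mulr0 psi0 //.
    by rewrite sumr_const mulr1.
  under eq_bigr => c _ do rewrite mulrC.
  by rewrite sum_psiM // mulr0.
by rewrite -E [in RHS](bigD1 0) //= mul0r psi0 // addrAC subrr add0r.
Qed.

Lemma sum_pow (g : K -> algC) : \sum_(x : K) g (x ^+ s) = \sum_(x : K) g x.
Proof. by rewrite [RHS](reindex_inj (pow_inj hs hcop)). Qed.

Lemma sum_pow_nz (g : K -> algC) :
  \sum_(x : K | x != 0) g (x ^+ s) = \sum_(x : K | x != 0) g x.
Proof.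
rewrite [RHS](reindex_inj (pow_inj hs hcop)) /=.
by apply: eq_bigl => x; rewrite pow_eq0.
Qed.


Lemma split_sum (f : F -> algC) :
  \sum_(v : F) f v = \sum_(v | Tf v == 0) f v
                   + \sum_(y : K | y != 0) \sum_(v | Tf v == 1) f (scl y v).
Proof.
rewrite (bigID (fun v => Tf v == 0)) /=; congr (_ + _).
rewrite (partition_big Tf (fun y => y != 0)) //=.
apply: eq_bigr => y y0; rewrite (reindex_inj (scl_inj y0)) /=.
apply: eq_bigl => v; rewrite Tf_scl mulf_eq0 (negPf y0) /=.
rewrite -{2}(mulr1 y) (inj_eq (mulfI y0)).
by case: eqP => // ->; rewrite [_ == 1]eq_sym oner_eq0.
Qed.

Lemma scale0_sum (f : F -> algC) c : c != 0 ->
  \sum_(v | Tf v == 0) f v = \sum_(v | Tf v == 0) f (scl c v).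
Proof.
move=> c0; rewrite (reindex_inj (scl_inj c0)) /=.
by apply: eq_bigl => v; rewrite Tf_scl mulf_eq0 (negPf c0).
Qed.

Lemma sum_psS (l : K) : l != 0 -> \sum_(v : F) ps (l * Sf v) = 0.
Proof.
move=> l0.
have -> : \sum_(v : F) ps (l * Sf v) = \prod_(i < k) \sum_(x : K) ps (l * x ^+ s).
  rewrite bigA_distr_bigA /=; apply: eq_bigr => v _.
  by rewrite /Sf mulr_sumr ps_sum.
rewrite (bigD1 (Ordinal hk)) //=.
by rewrite (sum_pow (fun x => ps (l * x))) sum_psiM // mul0r.
Qed.

Lemma lhs_expand (u : K) :
  \prod_(i < k) W p s (t i * u) = \sum_(v : F) ps (Sf v - u * Tf v).
Proof.
rewrite /W bigA_distr_bigA /=; apply: eq_bigr => v _.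
rewrite -ps_sum /Sf /Tf mulr_sumr -sumrB; congr ps; apply: eq_bigr => i _.
by rewrite mulrCA mulrA.
Qed.


Definition X0 := \sum_(v | Tf v == 0) ps (Sf v).
Definition N0 := \sum_(v | Tf v == 0) (1 : algC).
Definition N1 := \sum_(v | Tf v == 1) (1 : algC).
Definition N00 := \sum_(v | Tf v == 0) dl (Sf v).
Definition A0 := \sum_(v | Tf v == 1) dl (Sf v).

Lemma Nz : \sum_(y : K | y != 0) (1 : algC) = q - 1.
Proof.
have := sum_ps_nz 0; rewrite /dl eqxx mulr1 => <-.
by apply: eq_bigr => y _; rewrite mulr0 psi0.
Qed.

Lemma dl_scale (y z : K) : y != 0 -> dl (y ^+ s * z) = dl z.
Proof. by move=> y0; rewrite /dl mulf_eq0 expf_eq0 (negPf y0) andbF. Qed.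

Lemma sum_T0_nz : \sum_(v | Tf v == 0) \sum_(l : K | l != 0) ps (l * Sf v) = q * N00 - N0.
Proof.
under eq_bigr do rewrite sum_ps_nz.
by rewrite sumrB /N00 /N0 mulr_sumr.
Qed.

Lemma key1 : q * N00 - N0 + (q - 1) * (q * A0 - N1) = 0.
Proof.
have E : \sum_(l : K | l != 0) \sum_(v : F) ps (l * Sf v) = 0.
  by rewrite big1 // => l l0; rewrite sum_psS.
rewrite -{}E; under eq_bigr do rewrite split_sum.
rewrite big_split /= exchange_big /= sum_T0_nz; congr (_ + _).
rewrite exchange_big /= -Nz mulr_suml; apply: eq_bigr => y y0.
rewrite mul1r exchange_big /=.
under eq_bigr => v _ do (under eq_bigr => l _ do rewrite Sf_scl; rewrite sum_ps_nz dl_scale //).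
by rewrite sumrB /A0 /N1 mulr_sumr.
Qed.

Lemma key2 : (q - 1) * X0 = q * N00 - N0.
Proof.
rewrite -Nz mulr_suml -sum_T0_nz /X0.
under eq_bigr => c c0 do rewrite mul1r (scale0_sum _ c0).
rewrite exchange_big /=; apply: eq_bigr => v _.
under eq_bigr do rewrite Sf_scl.
exact: (sum_pow_nz (fun d => ps (d * Sf v))).
Qed.

Lemma q1_neq0 : q - 1 != 0.
Proof.
have h := finNzRing_gt1 K.
rewrite -(@natrB _ _ 1) ?(ltnW h) // pnatr_eq0 subn_eq0 -ltnNge //.
Qed.

Lemma D0 : X0 - N1 + q * A0 = 0.
Proof.
apply: (mulfI q1_neq0); rewrite mulr0 -key1 !mulrDr key2.
ring.
Qed.


Definition H (u z : K) : algC := \sum_(y : K) ps (z * y ^+ s - u * y).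

Lemma H0 (u : K) : u != 0 -> H u 0 = 0.
Proof.
move=> u0; rewrite /H; under eq_bigr do rewrite mul0r add0r -mulNr.
by rewrite sum_psiM // oppr_eq0.
Qed.

Lemma lhs2 (u : K) :
  \sum_(v : F) ps (Sf v - u * Tf v) = X0 + \sum_(v | Tf v == 1) (H u (Sf v) - 1).
Proof.
rewrite split_sum; congr (_ + _).
  by apply: eq_bigr => v /eqP ->; rewrite mulr0 subr0.
rewrite exchange_big /=; apply: eq_bigr => v /eqP T1.
rewrite /H [in RHS](bigD1 0) //= expr0n gtn_eqF // !mulr0 subr0 psi0 // addrC addrK.
by apply: eq_bigr => y _; rewrite Sf_scl Tf_scl T1 mulr1 mulrC.
Qed.

Lemma unit_sum (g : K -> algC) :
  \sum_(w : {unit K}) g (val w) = \sum_(x : K | x != 0) g x.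
Proof.
rewrite [RHS](reindex (fun w : {unit K} => val w)) /=.
  by apply: eq_bigl => w; rewrite -unitfE (valP w).
exists (insubd (1%g : {unit K})) => [w _|x].
  exact: valKd.
by rewrite inE -unitfE => xu; rewrite insubdK.
Qed.

Lemma Q_sum (b : K) :
  ((Q s t 1 b)%:R : algC) = \sum_(v | Tf v == 1) (Sf v == b ^+ s)%:R.
Proof.
rewrite /Q -sum1dep_card natr_sum big_mkcond [RHS]big_mkcond.
apply: eq_bigr => v _; rewrite -/(Tf v) -/(Sf v).
case: (Tf v == 1) => //=.
have -> : (Sf v ^+ sinv K s == b) = (Sf v == b ^+ s).
  by apply/eqP/eqP => [<-|->]; rewrite ?powKV ?powK.
by case: (Sf v == b ^+ s).
Qed.


Lemma inner (u z : K) : u != 0 ->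
  \sum_(y : K) \sum_(d : K | d != 0)
     ps (d * y ^+ s - u * y) * ((z == d)%:R - (z == 0)%:R) = H u z - q * dl z.
Proof.
move=> u0; rewrite /dl; have [->|z0] := eqVneq z 0.
  rewrite H0 // mulr1 sub0r.
  have E y : \sum_(d : K | d != 0) ps (d * y ^+ s - u * y) * (((0 : K) == d)%:R - 1)
     = - (ps (- (u * y)) * (q * dl y - 1)).
    have -> : dl y = dl (y ^+ s) by rewrite /dl pow_eq0.
    rewrite -(sum_ps_nz (y ^+ s)) mulr_sumr -sumrN.
    apply: eq_bigr => d d0; rewrite eq_sym (negPf d0) sub0r mulrN1 psiD //.
    by rewrite mulrC.
  under eq_bigr do rewrite E.
  rewrite sumrN; congr (- _).
  under eq_bigr do rewrite mulrBr mulr1.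
  rewrite sumrB.
  have -> : \sum_(y : K) ps (- (u * y)) = 0.
    by under eq_bigr do rewrite -mulNr; rewrite sum_psiM // oppr_eq0.
  rewrite subr0 (bigD1 0) //= big1 ?addr0.
    by rewrite mulr0 oppr0 psi0 // /dl eqxx mulr1 mul1r.
  by move=> y y0; rewrite /dl (negPf y0) mulr0 mulr0.
have f0 : (false%:R : algC) = 0 by [].
rewrite f0 mulr0 subr0 /H; apply: eq_bigr => y _.
under eq_bigr do rewrite subr0.
rewrite (bigD1 z) //= eqxx mulr1 big1 ?addr0 //.
by move=> d /andP[_ dz]; rewrite eq_sym (negPf dz) mulr0.
Qed.


Lemma W_scale (u e : K) : e != 0 ->
  W p s (u * e^-1) = \sum_(y : K) ps (e ^+ s * y ^+ s - u * y).
Proof.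
move=> e0; rewrite /W (reindex_inj (mulfI e0)) /=; apply: eq_bigr => y _.
by rewrite exprMn mulrA divfK.
Qed.

Lemma rhs (uu : {unit K}) :
  galg_mul (Wel K p s) (Vt s t) uu
  = \sum_(v | Tf v == 1) (H (val uu) (Sf v) - q * dl (Sf v)).
Proof.
set u := val uu.
have u0 : u != 0 by rewrite -unitfE (valP uu).
rewrite /galg_mul ffunE.
under eq_bigr => w _ do rewrite !ffunE FinRing.val_unitM FinRing.val_unitV.
transitivity (\sum_(x : K | x != 0) W p s x * ((Q s t 1 (x^-1 * u))%:R - (Q s t 1 0)%:R)).
  exact: (unit_sum (fun x => W p s x * ((Q s t 1 (x^-1 * u))%:R - (Q s t 1 0)%:R))).
have hinj : injective (fun e : K => u * e^-1).
  by move=> a b /(mulfI u0) /invr_inj.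
rewrite (reindex_inj hinj) /=.
transitivity (\sum_(e : K | e != 0) \sum_(y : K) \sum_(v | Tf v == 1)
   ps (e ^+ s * y ^+ s - u * y) * ((Sf v == e ^+ s)%:R - (Sf v == 0)%:R)).
  apply: eq_big => [e|e e0]; first by rewrite mulf_eq0 invr_eq0 (negPf u0).
  have {}e0 : e != 0 by apply: contraNneq e0 => ->; rewrite invr0 mulr0.
  rewrite invfM invrK mulrAC mulVf // mul1r W_scale //.
  rewrite (Q_sum e) (Q_sum 0) expr0n gtn_eqF // -sumrB.
  rewrite mulr_suml; apply: eq_bigr => y _; rewrite mulr_sumr.
  by apply: eq_bigr => v _.
rewrite exchange_big /=.
under eq_bigr => y _ do rewrite exchange_big /=.
rewrite exchange_big /=; apply: eq_bigr => v _.
rewrite -(inner (Sf v) u0); apply: eq_bigr => y _.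
exact: (sum_pow_nz (fun d => ps (d * y ^+ s - u * y) * ((Sf v == d)%:R - (Sf v == 0)%:R))).
Qed.


Lemma main_eq : Wt p s t = galg_mul (Wel K p s) (Vt s t).
Proof.
apply/ffunP => uu; rewrite rhs ffunE lhs_expand lhs2 !sumrB -mulr_sumr.
rewrite -/N1 -/A0.
have E : X0 = N1 - q * A0 by rewrite -[X0]subr0 -D0; ring.
rewrite E; ring.
Qed.

End Main.

Theorem proposition5p13 (K : finFieldType) (p : nat) (hp : p \in [pchar K])
  (s : nat) (hs : (0 < s)%N) (hcop : coprime s #|K|.-1)
  (k : nat) (hk : (0 < k)%N) (t : 'I_k -> K) (ht : forall i, t i != 0) :
  Wt p s t = galg_mul (Wel K p s) (Vt s t).
Proof. exact: main_eq. Qed.
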